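(* Let $R$ be a unital associative algebra over an infinite field $F$, let $n\geq 3$ be an integer, and let $p\in F[x]$ be a nonconstant polynomial. Then every (upper or lower) triangular matrix in $\mathrm{M}_n(R)$ can be written as a product of two elements of $p[\mathrm{M}_n(R),\mathrm{M}_n(R)]=\{p(AB)-p(BA)\mid A,B\in\mathrm{M}_n(R)\}$. *)

(* Defs.v *)
From mathcomp Require Import all_boot all_algebra.
Set Implicit Arguments. Unset Strict Implicit. Unset Printing Implicit Defensive.
Import GRing.Theory.
Local Open Scope ring_scope.

Definition mxpow (R : pzRingType) (n : nat) (A : 'M[R]_n) (k : nat) : 'M[R]_n :=
  iter k (mulmx A) 1%:M.

Definition mx_peval (F : fieldType) (R : algType F) (n : nat)
    (p : {poly F}) (A : 'M[R]_n) : 'M[R]_n :=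
  \sum_(i < size p) ((p`_i)%:A : R)%:M *m mxpow A i.

Definition p_commutator_set (F : fieldType) (R : algType F) (n : nat)
    (p : {poly F}) (C : 'M[R]_n) : Prop :=
  exists A B : 'M[R]_n, C = mx_peval p (A *m B) - mx_peval p (B *m A).

Definition infinite_type (T : eqType) : Prop :=
  forall s : seq T, exists x : T, x \notin s.

(* Main.v *)
Require Import Defs.
From mathcomp Require Import all_boot all_algebra zify.
Import GRing.Theory.
Set Implicit Arguments. Unset Strict Implicit. Unset Printing Implicit Defensive.
Local Open Scope ring_scope.



Section Aux.
Variables (F : fieldType) (R : algType F).

Definition Dg n (d : 'I_n -> F) : 'M[R]_n := \matrix_(i, j) ((d i)%:A *+ (i == j)).

Lemma scalar_comm m n (x : F) (M : 'M[R]_(m,n)) :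
  (x%:A : R)%:M *m M = M *m (x%:A)%:M.
Proof.
apply/matrixP=> i j; rewrite mul_scalar_mx !mxE (bigD1 j) //= big1 => [|k kj].
  by rewrite mxE eqxx mulr1n addr0 comm_alg.
by rewrite mxE (negPf kj) mulr0n mulr0.
Qed.

Lemma eq_Dg n (d e : 'I_n -> F) : (forall i, d i = e i) -> Dg d = Dg e.
Proof. by move=> h; apply/matrixP=> i j; rewrite !mxE h. Qed.

Lemma Dg_const n (x : F) : Dg (fun _ : 'I_n => x) = (x%:A)%:M.
Proof. by apply/matrixP=> i j; rewrite !mxE. Qed.

Lemma Dg_mul n (d e : 'I_n -> F) : Dg d *m Dg e = Dg (fun i => d i * e i).
Proof.
apply/matrixP=> i j; rewrite !mxE (bigD1 i) //= big1 => [|k ki].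
  rewrite !mxE eqxx mulr1n addr0; case: eqP => _; rewrite ?mulr0n ?mulr0 //.
  by rewrite !mulr1n -scalerAl mul1r scalerA.
by rewrite !mxE eq_sym (negPf ki) mulr0n mul0r.
Qed.

Lemma Dg_add n (d e : 'I_n -> F) : Dg d + Dg e = Dg (fun i => d i + e i).
Proof. by apply/matrixP=> i j; rewrite !mxE scalerDl mulrnDl. Qed.

Lemma Dg_sum n m (f : 'I_m -> 'I_n -> F) :
  \sum_(k < m) Dg (f k) = Dg (fun i => \sum_(k < m) f k i).
Proof.
apply/matrixP=> i j; rewrite summxE mxE.
under eq_bigr do rewrite mxE.
by rewrite sumrMnl scaler_suml.
Qed.

Lemma Dg1 n : Dg (fun _ : 'I_n => 1) = 1%:M.
Proof. by rewrite Dg_const scale1r. Qed.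

Lemma mxpow_conj n (K K' X : 'M[R]_n) k :
  K' *m K = 1%:M -> K *m K' = 1%:M ->
  mxpow (K *m X *m K') k = K *m mxpow X k *m K'.
Proof.
move=> h1 h2; elim: k => [|k IH] /=; first by rewrite /mxpow /= mulmx1 h2.
rewrite /mxpow /= -/(mxpow _ k) -/(mxpow _ k) IH.
by rewrite !mulmxA -[K *m X *m K' *m K]mulmxA h1 mulmx1.
Qed.

Lemma mxpow_Dg n (d : 'I_n -> F) k : mxpow (Dg d) k = Dg (fun i => d i ^+ k).
Proof.
elim: k => [|k IH]; first by rewrite /mxpow /= -Dg1; apply: eq_Dg => i; rewrite expr0.
rewrite /mxpow /= -/(mxpow _ k) IH Dg_mul; apply: eq_Dg => i; by rewrite exprS.
Qed.

Lemma peval_Dg (p : {poly F}) n (d : 'I_n -> F) :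
  mx_peval p (Dg d) = Dg (fun i => p.[d i]).
Proof.
rewrite /mx_peval.
under eq_bigr do rewrite mxpow_Dg -Dg_const Dg_mul.
rewrite Dg_sum; apply: eq_Dg => i; by rewrite horner_coef.
Qed.

Lemma peval_conj (p : {poly F}) n (K K' X : 'M[R]_n) :
  K' *m K = 1%:M -> K *m K' = 1%:M ->
  mx_peval p (K *m X *m K') = K *m mx_peval p X *m K'.
Proof.
move=> h1 h2; rewrite /mx_peval mulmx_sumr mulmx_suml; apply: eq_bigr => i _.
by rewrite mxpow_conj // !mulmxA scalar_comm.
Qed.

End Aux.



Section Conj.
Variables (F : fieldType) (R : algType F).

Lemma Dg_block m1 m2 (d : 'I_(m1 + m2) -> F) :
  Dg R d = block_mx (Dg R (fun i => d (lshift m2 i))) 0 0 (Dg R (fun i => d (rshift m1 i))).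
Proof.
rewrite -[Dg R d]submxK; congr block_mx; apply/matrixP=> i j;
  by rewrite !mxE ?eq_lshift ?eq_rshift ?eq_lrshift ?eq_rlshift ?mulr0n.
Qed.

Lemma Dg_inv_id n (d : 'I_n -> F) (x : F) :
  (forall i, x != d i) ->
  Dg R (fun _ => x) *m Dg R (fun i => (x - d i)^-1) =
  Dg R d *m Dg R (fun i => (x - d i)^-1) + 1%:M.
Proof.
move=> h; rewrite !Dg_mul -(Dg1 R) Dg_add; apply: eq_Dg => i.
have hi : x - d i != 0 by rewrite subr_eq0 h.
by rewrite -{1}(subrK (d i) x) mulrDl mulfV // addrC.
Qed.

Definition conjP n (d : 'I_n -> F) (N : 'M[R]_n) :=
  exists K K' : 'M[R]_n,
    [/\ K' *m K = 1%:M, K *m K' = 1%:M & K *m Dg R d = (Dg R d + N) *m K].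

Lemma conj_lower_step n :
  (forall (d : 'I_n -> F) (N : 'M[R]_n),
    (forall i j, i != j -> d i != d j) ->
    (forall i j : 'I_n, (i <= j)%N -> N i j = 0) -> conjP d N) ->
  forall d (N : 'M[R]_(1 + n)),
    (forall i j, i != j -> d i != d j) ->
    (forall i j : 'I_(1 + n), (i <= j)%N -> N i j = 0) -> conjP d N.
Proof.
move=> IH d N hd hN.
pose d0 := d (lshift n (ord0 : 'I_1)).
pose d2 := fun i : 'I_n => d (rshift 1 i).
pose N2 := drsubmx N.
pose c := dlsubmx N.
have hd2 : forall i j, i != j -> d2 i != d2 j.
  by move=> i j ij; apply: hd; apply: contra ij => /eqP h; apply/eqP; exact: (rshift_inj h).
have hN2 : forall i j : 'I_n, (i <= j)%N -> N2 i j = 0.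
  by move=> i j ij; rewrite !mxE; apply: hN; rewrite /= ltnS ?leq_add2l /=; exact: ij.
have [K2 [K2' [h1 h2 h3]]] := IH d2 N2 hd2 hN2.
pose W := Dg R (fun i => (d0 - d2 i)^-1).
pose k := K2 *m W *m K2' *m c.
have eN : N = block_mx 0 0 c N2 :> 'M_(1 + n).
  rewrite -{1}(submxK N); congr block_mx; apply/matrixP=> i j; rewrite !mxE hN //.
    by rewrite !ord1.
  by rewrite /= ord1.
have eD : Dg R d = block_mx (Dg R (fun _ : 'I_1 => d0)) 0 0 (Dg R d2) :> 'M_(1 + n).
  rewrite (Dg_block d); congr block_mx; apply: eq_Dg => i; by rewrite ord1.
exists (block_mx 1%:M 0 k K2), (block_mx 1%:M 0 (- (K2' *m k)) K2'); split.
- rewrite mulmx_block ?mulmx0 ?mul0mx ?mulmx1 ?mul1mx ?addr0 ?add0r h1 mulmxA.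
  by rewrite addNr -scalar_mx_block.
- rewrite mulmx_block ?mulmx0 ?mul0mx ?mulmx1 ?mul1mx ?addr0 ?add0r h2.
  by rewrite mulmxN mulmxA h2 mul1mx addrN -scalar_mx_block.
rewrite eD eN add_block_mx !mulmx_block ?mulmx0 ?mul0mx ?mulmx1 ?mul1mx ?addr0 ?add0r.
rewrite h3; congr block_mx; rewrite ?mul0mx ?addr0 //.
have hx : forall i, d0 != d2 i.
  by move=> i; apply: hd; apply/negP => /eqP /(congr1 val) /=.
rewrite Dg_const -scalar_comm -Dg_const.
have e1 : (Dg R d2 + N2) *m k = K2 *m Dg R d2 *m W *m K2' *m c by rewrite /k !mulmxA -h3.
have e2 : Dg R (fun _ : 'I_n => d0) *m k = K2 *m (Dg R (fun _ => d0) *m W) *m K2' *m c.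
  by rewrite /k !mulmxA Dg_const scalar_comm -Dg_const.
rewrite e2 Dg_inv_id // mulmxDr mulmx1 mulmxDl mulmxDl h2 mul1mx e1 !mulmxA addrC.
by [].
Qed.

Lemma Dg_inv_id2 n (d : 'I_n -> F) (x : F) :
  (forall i, x != d i) ->
  Dg R (fun i => (d i - x)^-1) *m Dg R d =
  Dg R (fun i => (d i - x)^-1) *m Dg R (fun _ => x) + 1%:M.
Proof.
move=> h; rewrite !Dg_mul -(Dg1 R) Dg_add; apply: eq_Dg => i.
have hi : d i - x != 0 by rewrite subr_eq0 eq_sym h.
by rewrite -{2}(subrK x (d i)) mulrDr mulVf // addrC.
Qed.

Lemma conj_upper_step n :
  (forall (d : 'I_n -> F) (N : 'M[R]_n),
    (forall i j, i != j -> d i != d j) ->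
    (forall i j : 'I_n, (j <= i)%N -> N i j = 0) -> conjP d N) ->
  forall (d : 'I_(1 + n) -> F) (N : 'M[R]_(1 + n)),
    (forall i j, i != j -> d i != d j) ->
    (forall i j : 'I_(1 + n), (j <= i)%N -> N i j = 0) -> conjP d N.
Proof.
move=> IH d N hd hN.
pose d0 := d (lshift n (ord0 : 'I_1)).
pose d2 := fun i : 'I_n => d (rshift 1 i).
pose N2 := drsubmx N.
pose r := ursubmx N.
have hd2 : forall i j, i != j -> d2 i != d2 j.
  by move=> i j ij; apply: hd; apply: contra ij => /eqP h; apply/eqP; exact: (rshift_inj h).
have hN2 : forall i j : 'I_n, (j <= i)%N -> N2 i j = 0.
  by move=> i j ij; rewrite !mxE; apply: hN; rewrite /= ltnS ?leq_add2l /=; exact: ij.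
have [K2 [K2' [h1 h2 h3]]] := IH d2 N2 hd2 hN2.
pose W := Dg R (fun i => (d2 i - d0)^-1).
pose k := r *m K2 *m W.
have eN : N = block_mx 0 r 0 N2.
  rewrite -{1}(submxK N); congr block_mx; apply/matrixP=> i j; rewrite !mxE hN //.
    by rewrite !ord1.
  by rewrite /= ord1.
have eD : Dg R d = block_mx (Dg R (fun _ : 'I_1 => d0)) 0 0 (Dg R d2).
  rewrite (Dg_block d); congr block_mx; apply: eq_Dg => i; by rewrite ord1.
exists (block_mx 1%:M k 0 K2), (block_mx 1%:M (- (k *m K2')) 0 K2'); split.
- rewrite mulmx_block ?mulmx0 ?mul0mx ?mulmx1 ?mul1mx ?addr0 ?add0r h1.
  by rewrite mulNmx -mulmxA h1 mulmx1 addrN -scalar_mx_block.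
- rewrite mulmx_block ?mulmx0 ?mul0mx ?mulmx1 ?mul1mx ?addr0 ?add0r h2.
  by rewrite ?addrN ?addNr -scalar_mx_block.
rewrite eD eN add_block_mx !mulmx_block ?mulmx0 ?mul0mx ?mulmx1 ?mul1mx ?addr0 ?add0r.
rewrite h3; congr block_mx; rewrite ?mul0mx ?addr0 ?add0r //.
have hx : forall i, d0 != d2 i.
  by move=> i; apply: hd; apply/negP => /eqP /(congr1 val) /=.
rewrite Dg_const scalar_comm -Dg_const /k -!mulmxA Dg_inv_id2 //.
by rewrite !mulmxDr mulmx1.
Qed.

Lemma conj_lower n (d : 'I_n -> F) (N : 'M[R]_n) :
  (forall i j, i != j -> d i != d j) ->
  (forall i j : 'I_n, (i <= j)%N -> N i j = 0) -> conjP d N.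
Proof.
elim: n d N => [|n IH] d N hd hN.
  exists 1%:M, 1%:M; split; by apply/matrixP => [[]].
exact: conj_lower_step.
Qed.

Lemma conj_upper n (d : 'I_n -> F) (N : 'M[R]_n) :
  (forall i j, i != j -> d i != d j) ->
  (forall i j : 'I_n, (j <= i)%N -> N i j = 0) -> conjP d N.
Proof.
elim: n d N => [|n IH] d N hd hN.
  exists 1%:M, 1%:M; split; by apply/matrixP => [[]].
exact: conj_upper_step.
Qed.

Lemma exists_uniq (hF : infinite_type F) m : exists s : seq F, uniq s /\ size s = m.
Proof.
elim: m => [|m [s [us ss]]]; first by exists [::].
have [x hx] := hF s; exists (x :: s); by rewrite /= hx us ss.
Qed.

Lemma exists_nonval (hF : infinite_type F) (p : {poly F}) (hp : (1 < size p)%N)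
  (vs : seq F) : exists x, p.[x] \notin vs.
Proof.
pose Q := \prod_(v <- vs) (p - v%:P).
have Q0 : Q != 0.
  rewrite prodf_seq_neq0; apply/allP => v _ /=.
  apply/negP => /eqP h; move: hp; have -> : p = v%:P by apply/eqP; rewrite -subr_eq0 h.
  by rewrite size_polyC; case: (v != 0).
have [s [us ss]] := exists_uniq hF (size Q).
have : ~~ all (root Q) s.
  by apply/negP => hall; have := max_poly_roots Q0 hall us; rewrite ss ltnn.
case/allPn => x _ hx; exists x; apply: contra hx => hin.
rewrite /root /Q horner_prod; apply/eqP/eqP; rewrite prodf_seq_eq0; apply/hasP.
by exists p.[x] => //; rewrite !hornerE subrr.
Qed.

Lemma exists_distinct (hF : infinite_type F) (p : {poly F}) (hp : (1 < size p)%N) m :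
  exists s : seq F, size s = m /\ uniq (map (horner p) s).
Proof.
elim: m => [|m [s [ss us]]]; first by exists [::].
have [x hx] := exists_nonval hF hp (map (horner p) s).
by exists (x :: s); rewrite /= ss hx us.
Qed.

Lemma exists_mu (hF : infinite_type F) (p : {poly F}) (hp : (1 < size p)%N) n :
  exists mu : 'I_n -> F, forall i j, i != j -> p.[mu i] != p.[mu j].
Proof.
have [s [ss us]] := exists_distinct hF hp n.
exists (fun i => nth 0 s i) => i j ij.
have hi : (i < size (map (horner p) s))%N by rewrite size_map ss.
have hj : (j < size (map (horner p) s))%N by rewrite size_map ss.
rewrite -!(nth_map 0 0 (horner p)) ?ss //.
by rewrite (nth_uniq 0 hi hj us).
Qed.

Lemma zerodiag_comm (hF : infinite_type F) (p : {poly F}) (hp : (1 < size p)%N)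
  n (M : 'M[R]_n) : (forall i, M i i = 0) -> p_commutator_set p M.
Proof.
move=> hM.
have [mu hmu] := exists_mu hF hp n.
pose d := fun i => p.[mu i].
pose U : 'M[R]_n := \matrix_(i,j) (if (i < j)%N then M i j else 0).
pose L : 'M[R]_n := \matrix_(i,j) (if (j < i)%N then M i j else 0).
have hU : forall i j : 'I_n, (j <= i)%N -> U i j = 0.
  by move=> i j h; rewrite mxE ltnNge h.
have hL : forall i j : 'I_n, (i <= j)%N -> (- L) i j = 0.
  by move=> i j h; rewrite !mxE ltnNge h oppr0.
have [K1 [K1' [a1 a2 a3]]] := conj_upper hmu hU.
have [K2 [K2' [b1 b2 b3]]] := conj_lower hmu hL.
exists (K1 *m K2'), (K2 *m Dg R mu *m K1').
have eAB : K1 *m K2' *m (K2 *m Dg R mu *m K1') = K1 *m Dg R mu *m K1'.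
  by rewrite !mulmxA -[K1 *m K2' *m K2]mulmxA b1 mulmx1.
have eBA : K2 *m Dg R mu *m K1' *m (K1 *m K2') = K2 *m Dg R mu *m K2'.
  by rewrite !mulmxA -[K2 *m Dg R mu *m K1' *m K1]mulmxA a1 mulmx1.
rewrite eAB eBA !peval_conj // !peval_Dg.
have e1 : K1 *m Dg R d *m K1' = Dg R d + U by rewrite a3 -mulmxA a2 mulmx1.
have e2 : K2 *m Dg R d *m K2' = Dg R d + - L by rewrite b3 -mulmxA b2 mulmx1.
rewrite e1 e2; apply/matrixP => i j; rewrite !mxE opprD addrACA subrr add0r opprK.
case: (ltngtP i j) => h; rewrite ?addr0 ?add0r //.
by have -> : i = j by apply: val_inj.
Qed.

End Conj.



Section Fact.
Variables (F : fieldType) (R : algType F).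

Definition Pm k (f : 'I_k -> 'I_k) : 'M[R]_k := \matrix_(i, j) (j == f i)%:R.

Lemma Pm_mull k (f : 'I_k -> 'I_k) (M : 'M[R]_k) i j : (Pm f *m M) i j = M (f i) j.
Proof.
rewrite mxE (bigD1 (f i)) //= big1 => [|l hl]; rewrite mxE.
  by rewrite eqxx mul1r addr0.
by rewrite (negPf hl) mul0r.
Qed.

Lemma Pm_mulr k (f h : 'I_k -> 'I_k) (fh : cancel f h) (hf : cancel h f)
  (M : 'M[R]_k) i j : (M *m Pm f) i j = M i (h j).
Proof.
rewrite mxE (bigD1 (h j)) //= big1 => [|l hl]; rewrite mxE.
  by rewrite hf eqxx mulr1 addr0.
have -> : (j == f l) = false.
  by apply/negP => /eqP e; move: hl; rewrite e fh eqxx.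
by rewrite mulr0.
Qed.

Lemma rowsup_mulr k (M : 'M[R]_k) (a : 'I_k) (y : 'I_k -> R) i j :
  (M *m \matrix_(i0, j0) ((i0 == a)%:R * y j0)) i j = M i a * y j.
Proof.
rewrite mxE (bigD1 a) //= big1 => [|l hl]; rewrite mxE.
  by rewrite eqxx mul1r addr0.
by rewrite (negPf hl) mul0r mulr0.
Qed.

Lemma fact_lower n (T : 'M[R]_n) : (3 <= n)%N ->
  (forall i j : 'I_n, (i < j)%N -> T i j = 0) ->
  exists C D : 'M[R]_n, [/\ forall i, C i i = 0, forall i, D i i = 0 & T = C *m D].
Proof.
case: n T => [|[|[|m]]] // T _ hT.
pose b : 'I_m.+3 := ord_max.
pose a : 'I_m.+3 := inord m.+1.
pose z : 'I_m.+3 := ord0.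
have va : (a : nat) = m.+1 by rewrite inordK.
have hab : a != b by apply/negP => /eqP /(congr1 (@nat_of_ord _)); rewrite va /=; lia.
have haz : a != z by apply/negP => /eqP /(congr1 (@nat_of_ord _)); rewrite va.
have hbz : b != z by [].
have hga : (@ordS m.+3) a = b by apply: val_inj; rewrite /= va modn_small.
have hgb : (@ordS m.+3) b = z by apply: val_inj; rewrite /= modnn.
have hgi : forall i, i != b -> (i < (@ordS m.+3) i)%N.
  move=> i hi; rewrite /= modn_small //.
  have := ltn_ord i; move: hi; rewrite -val_eqE /= => hi hi'; lia.
have hgi2 : forall i, (i == (@ordS m.+3) i) = false.
  move=> i; apply/negP => /eqP /(congr1 (@nat_of_ord _)) /=.
  case: (ltngtP i.+1 m.+3) => [h1|h1|h1]; first by rewrite modn_small //; lia.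
    by have := ltn_ord i; lia.
  by rewrite h1 modnn => e; move: h1; rewrite e.
have hhj1 : forall j, ((@ord_pred m.+3) j == a) = (j == b).
  by move=> j; rewrite -hga (can2_eq (@ord_predK _) (@ordSK _)).
have hhj2 : forall j, ((@ord_pred m.+3) j == b) = (j == z).
  by move=> j; rewrite -hgb (can2_eq (@ord_predK _) (@ordSK _)).
pose t := T b b.
pose s := T b z.
pose x := fun j : 'I_m.+3 => if j == a then 1 - t else if j == b then - s else 0.
pose y := fun j : 'I_m.+3 => if j == b then t - 1 else if j == z then s else 0.
pose X : 'M[R]_m.+3 := \matrix_(i, j) ((i == b)%:R * x j).
pose Y : 'M[R]_m.+3 := \matrix_(i, j) ((i == a)%:R * y j).
exists (T *m Pm (@ord_pred m.+3) + X), (Pm (@ordS m.+3) + Y); split.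
- move=> i; rewrite mxE (Pm_mulr (@ord_predK _) (@ordSK _)) mxE.
  case: (eqVneq i b) => [->|hi].
    by rewrite mul1r /x eq_sym (negPf hab) eqxx hgb subrr.
  by rewrite /= mulr0n mul0r addr0 hT // hgi.
- move=> i; rewrite !mxE hgi2 add0r.
  case: (eqVneq i a) => [->|hi]; last by rewrite mul0r.
  by rewrite /y (negPf hab) (negPf haz) mulr0.
apply/matrixP => i j.
have eC : forall k, (T *m Pm (@ord_pred m.+3) + X) i k = T i ((@ordS m.+3) k) + (i == b)%:R * x k.
  by move=> k; rewrite mxE (Pm_mulr (@ord_predK _) (@ordSK _)) mxE.
rewrite mulmxDr mxE (Pm_mulr (@ordSK _) (@ord_predK _)) rowsup_mulr !eC ord_predK hga.
case: (eqVneq i b) => [->|hi].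
  rewrite /= mulr1n !mul1r -/t /x hhj1 hhj2 eqxx [t + _]addrC subrK mul1r /y.
  case: (eqVneq j b) => _.
    by rewrite -addrA [_ + (t - 1)]addrA subrK subrr addr0.
  case: (eqVneq j z) => _; first by rewrite -addrA addNr addr0.
  by rewrite !addr0.
have hib : (i < b)%N by move: hi; rewrite -val_eqE /=; have := ltn_ord i; lia.
by rewrite /= mulr0n !mul0r !addr0 (hT i b hib) mul0r addr0.
Qed.
End Fact.



Theorem theorem4p1 (F : fieldType) (R : algType F) (n : nat) (p : {poly F})
  (hF : infinite_type F) (hn : (3 <= n)%N) (hp : (1 < size p)%N)
  (T : 'M[R]_n) (hT : is_trig_mx T || is_trig_mx T^T) :
  exists C D : 'M[R]_n,
    p_commutator_set p C /\ p_commutator_set p D /\ T = C *m D.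
Proof.
case/orP: hT => [/is_trig_mxP hT | /is_trig_mxP hT].
  have [C [D [hC hD e]]] := fact_lower hn hT.
  by exists C, D; split; [exact: zerodiag_comm | split; [exact: zerodiag_comm|]].
pose J : 'M[R]_n := Pm R (@rev_ord n).
have eJ : forall M : 'M[R]_n, forall i j, (J *m M *m J) i j = M (rev_ord i) (rev_ord j).
  by move=> M i j; rewrite (Pm_mulr (@rev_ordK _) (@rev_ordK _)) Pm_mull.
have JJ : J *m J = 1%:M.
  apply/matrixP => i j; rewrite Pm_mull !mxE rev_ordK eq_sym.
  by case: eqP.
have hT' : forall i j : 'I_n, (i < j)%N -> (J *m T *m J) i j = 0.
  move=> i j ij; rewrite eJ.
  have := hT (rev_ord j) (rev_ord i); rewrite mxE; apply.
  rewrite /=; have := ltn_ord j; lia.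
have [C [D [hC hD e]]] := fact_lower hn hT'.
exists (J *m C *m J), (J *m D *m J); split.
  by apply: zerodiag_comm => // i; rewrite eJ.
split; first by apply: zerodiag_comm => // i; rewrite eJ.
rewrite !mulmxA -[J *m C *m J *m J]mulmxA JJ mulmx1.
by rewrite -[J *m C *m D]mulmxA -e !mulmxA JJ mul1mx -mulmxA JJ mulmx1.
Qed.
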